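(* Let $\mathscr{A}$ be a Kripke structure, $a\in A$, and $k>0$. There is an $\mathbb{M}_k$-coalgebra $\alpha:(\mathscr{A},a)\to\mathbb{M}_k(\mathscr{A},a)$ if and only if the submodel generated by $a$ is a synchronization tree of height $\le k$.
   Context: Kripke structures: $\sigma$-structures with unary symbols $P$ and binary symbols $R_\alpha$; write $a\xrightarrow{\alpha}a'$ for $R_\alpha^{\mathscr{A}}(a,a')$. $\mathbb{M}_k(\mathscr{A},a)$: universe $[a]$ (the point) plus all $[a_0,\alpha_1,a_1,\dots,\alpha_j,a_j]$ with $a_0=a$, $1\le j\le k$, $a_i\xrightarrow{\alpha_{i+1}}a_{i+1}$; $P(s)$ iff $P^{\mathscr{A}}$ holds of the last element $\varepsilon(s)$; $R_\alpha(s,t)$ iff $t=s[\alpha,a']$. Comultiplication: $\delta[a_0,\alpha_1,a_1,\dots,\alpha_j,a_j]=[[a_0],\alpha_1,[a_0,\alpha_1,a_1],\dots,\alpha_j,[a_0,\alpha_1,\dots,\alpha_j,a_j]]$; functor action on a point-preserving homomorphism $h$: $\mathbb{M}_k h[a_0,\alpha_1,a_1,\dots]=[h(a_0),\alpha_1,h(a_1),\dots]$. A coalgebra is a point-preserving homomorphism $\alpha:(\mathscr{A},a)\to\mathbb{M}_k(\mathscr{A},a)$ with $\delta\circ\alpha=\mathbb{M}_k\alpha\circ\alpha$ and $\varepsilon\circ\alpha=\mathrm{id}$. The submodel generated by $a$ is the restriction of $\mathscr{A}$ to elements $a'$ reachable by a finite path $a\xrightarrow{\alpha_1}\cdots\xrightarrow{\alpha_m}a'$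 ($m\ge0$); it is a synchronization tree if each such $a'$ is reached by a unique such path, and its height is the maximum length of such a path.
   Formalization: The right-hand side of the equivalence also includes that every element of $\mathscr{A}$ is reachable from a by a finite path, so $\mathscr{A}$ is itself the submodel generated by a. The statement above fails without it. *)

(* Defs.v *)
From Stdlib Require Import List Arith.
Import ListNotations.
Set Implicit Arguments.

(* A Kripke structure over a signature with unary symbols PS and binary
   (action) symbols Act is given by a carrier A, P : PS -> A -> Prop and
   R : Act -> A -> A -> Prop;  R b x y  means  x --b--> y. *)

(* A (formal) path [a0, b1, a1, ..., bj, aj] is represented as
   (a0, [(b1,a1); ...; (bj,aj)]). *)
Definition kpath (X Act : Type) : Type := (X * list (Act * X))%type.

Fixpoint chain (X Act : Type) (R : Act -> X -> X -> Prop) (x : X)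
  (l : list (Act * X)) : Prop :=
  match l with
  | [] => True
  | (b, y) :: l' => R b x y /\ chain R y l'
  end.

Fixpoint lastl (X Act : Type) (x : X) (l : list (Act * X)) : X :=
  match l with
  | [] => x
  | (_, y) :: l' => lastl y l'
  end.

Definition plast (X Act : Type) (s : kpath X Act) : X := lastl (fst s) (snd s).

Definition Mk_elem (A Act : Type) (R : Act -> A -> A -> Prop) (a : A) (k : nat)
  (s : kpath A Act) : Prop :=
  fst s = a /\ chain R a (snd s) /\ length (snd s) <= k.

Fixpoint delta_aux (X Act : Type) (a0 : X) (pre : list (Act * X))
  (l : list (Act * X)) : list (Act * kpath X Act) :=
  match l with
  | [] => []
  | (b, x) :: l' =>
      (b, (a0, pre ++ [(b, x)])) :: delta_aux a0 (pre ++ [(b, x)]) l'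
  end.

(* comultiplication delta[a0,b1,a1,...] = [[a0], b1, [a0,b1,a1], ...] *)
Definition delta (X Act : Type) (s : kpath X Act) : kpath (kpath X Act) Act :=
  ((fst s, []), delta_aux (fst s) [] (snd s)).

Definition Mmap (X Y Act : Type) (h : X -> Y) (s : kpath X Act) : kpath Y Act :=
  (h (fst s), map (fun p => (fst p, h (snd p))) (snd s)).

(* alpha : (A,a) -> M_k(A,a) is an M_k-coalgebra:
   a point-preserving homomorphism into M_k(A,a) with
   delta o alpha = M_k alpha o alpha and eps o alpha = id. *)
Definition is_Mk_coalgebra (PS Act A : Type) (P : PS -> A -> Prop)
  (R : Act -> A -> A -> Prop) (a : A) (k : nat) (alpha : A -> kpath A Act) : Prop :=
  (forall x, Mk_elem R a k (alpha x)) /\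
  alpha a = (a, []) /\
  (* preserves unary relations: P(s) iff P holds of eps(s) *)
  (forall p x, P p x -> P p (plast (alpha x))) /\
  (* preserves binary relations: R_b(s,t) iff t = s[b,a'] *)
  (forall b x y, R b x y ->
     exists y', alpha y = (fst (alpha x), snd (alpha x) ++ [(b, y')])) /\
  (forall x, delta (alpha x) = Mmap alpha (alpha x)) /\
  (forall x, plast (alpha x) = x).

Definition reachable (A Act : Type) (R : Act -> A -> A -> Prop) (a x : A) : Prop :=
  exists l : list (Act * A), chain R a l /\ lastl a l = x.

Definition gen_R (A Act : Type) (R : Act -> A -> A -> Prop) (a : A) :
  Act -> A -> A -> Prop :=
  fun b x y => reachable R a x /\ reachable R a y /\ R b x y.

Definition gen_sync_tree (A Act : Type) (R : Act -> A -> A -> Prop) (a : A) : Prop :=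
  forall l1 l2 : list (Act * A),
    chain (gen_R R a) a l1 -> chain (gen_R R a) a l2 ->
    lastl a l1 = lastl a l2 -> l1 = l2.

Definition gen_height_le (A Act : Type) (R : Act -> A -> A -> Prop) (a : A) (k : nat) : Prop :=
  forall l : list (Act * A), chain (gen_R R a) a l -> length l <= k.

(* Main.v *)
Require Import Defs.
From Stdlib Require Import List Arith Lia ClassicalEpsilon.
Import ListNotations.

Lemma chain_app (X Act : Type) (R : Act -> X -> X -> Prop) (l1 l2 : list (Act * X)) :
  forall x, chain R x (l1 ++ l2) <-> chain R x l1 /\ chain R (lastl x l1) l2.
Proof.
  induction l1 as [|[b y] l1 IH]; intros x; simpl.
  - tauto.
  - rewrite IH. tauto.
Qed.

Lemma lastl_app (X Act : Type) (l1 l2 : list (Act * X)) :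
  forall x, lastl x (l1 ++ l2) = lastl (lastl x l1) l2.
Proof.
  induction l1 as [|[b y] l1 IH]; intros x; simpl; auto.
Qed.

Lemma chain_mono (X Act : Type) (R S : Act -> X -> X -> Prop)
  (H : forall b x y, R b x y -> S b x y) (l : list (Act * X)) :
  forall x, chain R x l -> chain S x l.
Proof.
  induction l as [|[b y] l IH]; intros x; simpl; auto.
  intros [h1 h2]; split; auto.
Qed.

Lemma chain_gen (A Act : Type) (R : Act -> A -> A -> Prop) (a : A)
  (Hr : forall x, reachable R a x) l x :
  chain R x l -> chain (gen_R R a) x l.
Proof.
  apply chain_mono. intros b u v h. unfold gen_R; auto.
Qed.

Theorem mainTheorem15 (PS Act A : Type) (P : PS -> A -> Prop)
  (R : Act -> A -> A -> Prop) (a : A) (k : nat) (hk : 0 < k) :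
  (exists alpha : A -> kpath A Act, is_Mk_coalgebra P R a k alpha) <->
  ((forall x : A, reachable R a x) /\
   gen_sync_tree R a /\ gen_height_le R a k).
Proof.
  split.
  - intros [alpha [Hel [Hpt [HP [Hhom [Hco Hcu]]]]]].
    assert (F : forall l, chain R a l -> alpha (lastl a l) = (a, l)).
    { induction l as [|[b y] l IH] using rev_ind; intros Hc.
      - simpl. exact Hpt.
      - apply chain_app in Hc as [Hc1 Hc2]. simpl in Hc2. destruct Hc2 as [Hb _].
        destruct (Hhom _ _ _ Hb) as [y' Hy]. rewrite (IH Hc1) in Hy. simpl in Hy.
        assert (y' = y).
        { pose proof (Hcu y) as E. rewrite Hy in E. unfold plast in E. simpl in E.
          rewrite lastl_app in E. simpl in E. exact E. }
        subst y'. rewrite lastl_app. simpl. exact Hy. }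
    assert (Rg : forall b x y, gen_R R a b x y -> R b x y).
    { intros b x y [_ [_ h]]; exact h. }
    split; [|split].
    + intros x. destruct (Hel x) as [H1 [H2 _]]. exists (snd (alpha x)). split.
      * rewrite <- H1 in H2 at 1. rewrite H1 in H2. exact H2.
      * pose proof (Hcu x) as E. unfold plast in E. rewrite H1 in E. exact E.
    + intros l1 l2 h1 h2 e.
      apply (chain_mono _ _ _ _ Rg _ _) in h1. apply (chain_mono _ _ _ _ Rg _ _) in h2.
      apply F in h1. apply F in h2. rewrite e in h1. rewrite h1 in h2.
      injection h2; auto.
    + intros l h. apply (chain_mono _ _ _ _ Rg _ _) in h. apply F in h.
      destruct (Hel (lastl a l)) as [_ [_ H3]]. rewrite h in H3. exact H3.
  - intros [Hr [Hs Hh]].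
    set (alpha := fun x => (a, proj1_sig (constructive_indefinite_description _ (Hr x)))
                   : kpath A Act).
    assert (Ha : forall x, chain R a (snd (alpha x)) /\ lastl a (snd (alpha x)) = x).
    { intros x. unfold alpha; simpl.
      destruct (constructive_indefinite_description _ (Hr x)) as [l Hl]; exact Hl. }
    assert (U : forall l, chain R a l -> alpha (lastl a l) = (a, l)).
    { intros l Hl. unfold alpha at 1. f_equal.
      destruct (Ha (lastl a l)) as [c e]. apply Hs.
      - apply chain_gen; auto. - apply chain_gen; auto. - exact e. }
    assert (Hf : forall x, fst (alpha x) = a) by reflexivity.
    clearbody alpha.
    exists alpha. unfold is_Mk_coalgebra.
    split; [|split; [|split; [|split; [|split]]]].
    + intros x. destruct (Ha x) as [c e]. unfold Mk_elem. split; [apply Hf|].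
      split; [exact c|]. apply Hh. apply chain_gen; auto.
    + apply (U []). simpl; auto.
    + intros p x Hp. unfold plast. rewrite Hf. rewrite (proj2 (Ha x)). exact Hp.
    + intros b x y Hb. exists y. rewrite Hf.
      destruct (Ha x) as [c e].
      assert (C : chain R a (snd (alpha x) ++ [(b, y)])).
      { apply chain_app. split; auto. simpl. rewrite e. auto. }
      apply U in C. rewrite lastl_app in C. simpl in C. rewrite C. reflexivity.
    + intros x. destruct (Ha x) as [c e].
      unfold delta, Mmap. rewrite Hf.
      assert (G : forall l pre, chain R a (pre ++ l) ->
                delta_aux a pre l = map (fun p => (fst p, alpha (snd p))) l).
      { induction l as [|[b y] l IH]; intros pre Hc; simpl; auto.
        assert (C1 : chain R a (pre ++ [(b, y)])).
        { apply chain_app in Hc as [H1 H2]. simpl in H2. destruct H2 as [H2 _].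
          apply chain_app. split; auto. simpl. auto. }
        f_equal.
        - f_equal. apply U in C1. rewrite lastl_app in C1. simpl in C1. auto.
        - apply IH. rewrite <- app_assoc. simpl. exact Hc. }
      rewrite (G _ [] c). f_equal. symmetry. apply (U []). simpl; auto.
    + intros x. unfold plast. rewrite Hf. apply Ha.
Qed.
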